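(* Let $a$ and $b$ be relatively prime integers with $1<a<b$, let $(u,v)$ be the definitely least solution of the Diophantine equation $ax+by=1$, and let $S=\langle a,b\rangle=\{\lambda_1a+\lambda_2b:\lambda_1,\lambda_2\in\mathbb{N}\}$. Then the number of isolated gaps of $S$ is $\#I(S)=|uv|$.
   Context: $\mathbb{N}$ denotes the set of nonnegative integers. A gap of a numerical semigroup $S\subseteq\mathbb{N}$ is an element of $\mathbb{N}\setminus S$. An isolated gap of $S$ is a gap $x$ of $S$ such that $x-1\in S$ and $x+1\in S$; $I(S)$ denotes the set of isolated gaps of $S$. For relatively prime positive integers $a,b$, a solution $(u,v)\in\mathbb{Z}^2$ of $ax+by=1$ is the definitely least solution if both $|u|$ and $|v|$ attain their least possible values among all integer solutions; such a solution exists and is unique, and a solution $(x_0,y_0)$ is the definitely least solution if and only if $|x_0|\le b/2$ and $|y_0|\le a/2$. *)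

(* Defs.v *)
From Stdlib Require Import ZArith List.
Open Scope Z_scope.

Definition in_semigroup2 (a b x : Z) : Prop :=
  exists l1 l2 : nat, x = Z.of_nat l1 * a + Z.of_nat l2 * b.

Definition is_gap2 (a b x : Z) : Prop := 0 <= x /\ ~ in_semigroup2 a b x.

Definition is_isolated_gap2 (a b x : Z) : Prop :=
  is_gap2 a b x /\ in_semigroup2 a b (x - 1) /\ in_semigroup2 a b (x + 1).

Definition definitely_least_solution (a b u v : Z) : Prop :=
  a * u + b * v = 1 /\
  forall x y : Z, a * x + b * y = 1 -> Z.abs u <= Z.abs x /\ Z.abs v <= Z.abs y.

(* Main.v *)
Require Import Defs.
From Stdlib Require Import ZArith List Lia.
Open Scope Z_scope.

Lemma NoDup_prod {A B : Type} (l : list A) (l' : list B) :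
  NoDup l -> NoDup l' -> NoDup (list_prod l l').
Proof.
  induction 1 as [|x l Hx Hl IH]; intros H'; simpl; [constructor|].
  apply NoDup_app.
  - apply NoDup_map_NoDup_ForallPairs; auto.
    intros p q _ _ E. now injection E.
  - now apply IH.
  - intros [y z] Hin Hin2. apply in_map_iff in Hin as [z' [E _]].
    injection E as <- <-. apply in_prod_iff in Hin2 as [Hy _]. tauto.
Qed.

Definition rng (s n : Z) : list Z := map (fun k => s + Z.of_nat k) (seq 0 (Z.to_nat n)).

Lemma rng_In s n i : 0 <= n -> (In i (rng s n) <-> s <= i < s + n).
Proof.
  intros Hn. unfold rng. rewrite in_map_iff. split.
  - intros [k [<- Hk]]. apply in_seq in Hk. lia.
  - intros H. exists (Z.to_nat (i - s)). split; [lia|]. apply in_seq. lia.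
Qed.

Lemma rng_NoDup s n : NoDup (rng s n).
Proof.
  unfold rng. apply NoDup_map_NoDup_ForallPairs; [|apply seq_NoDup].
  intros x y _ _ E. lia.
Qed.

Lemma rng_len s n : length (rng s n) = Z.to_nat n.
Proof. unfold rng. now rewrite length_map, length_seq. Qed.


Section L.
Variables a b u w : Z.
Hypotheses (Ha : 1 < a) (Hb : 1 < b) (Hbez : a*u - b*w = 1) (Hu : 0 < u) (Hw : 0 < w)
  (Hu2 : 2*u <= b) (Hw2 : 2*w <= a).

Lemma keyK c d p q : 0 <= c < b -> 0 <= p -> 0 <= q -> c*a + d*b = p*a + q*b -> 0 <= d.
Proof.
  intros Hc Hp Hq E.
  set (k := (d-q)*u - (p-c)*w).
  assert (Hpk : p - c = k*b).
  { unfold k. assert ((p-c)*(a*u) = (p-c)*(1 + b*w)) by (f_equal; lia). nia. }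
  assert (Hdk : d - q = k*a).
  { assert ((d-q)*b = (k*a)*b) by nia. apply Z.mul_reg_r with b; lia. }
  destruct (Z_lt_le_dec k 0); nia.
Qed.

Lemma semi_ex x : in_semigroup2 a b x -> exists p q, 0 <= p /\ 0 <= q /\ x = p*a + q*b.
Proof. intros [l1 [l2 E]]. exists (Z.of_nat l1), (Z.of_nat l2). lia. Qed.

Lemma semi_in p q x : 0 <= p -> 0 <= q -> x = p*a + q*b -> in_semigroup2 a b x.
Proof. intros. exists (Z.to_nat p), (Z.to_nat q). rewrite !Z2Nat.id; lia. Qed.

Lemma charac x : is_isolated_gap2 a b x <->
  exists i j, b - u <= i < b /\ -w <= j < 0 /\ x = i*a + j*b.
Proof.
  split.
  - intros [[Hx0 Hns] [Hm Hp]].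
    apply semi_ex in Hp as [p [q [Hp0 [Hq0 Ep]]]].
    apply semi_ex in Hm as [r [s [Hr0 [Hs0 Em]]]].
    set (i := (p-u) mod b). set (j := q + w + ((p-u)/b)*a).
    assert (Hi : 0 <= i < b) by (apply Z.mod_pos_bound; lia).
    assert (Hdm : p - u = b*((p-u)/b) + i) by (apply Z.div_mod; lia).
    assert (Ex : x = i*a + j*b) by (unfold j; nia).
    clearbody i j.
    assert (Hj : j < 0).
    { destruct (Z_lt_le_dec j 0); auto. exfalso. apply Hns. now apply (semi_in i j). }
    assert (Hiu : b <= i + u).
    { destruct (Z_lt_le_dec (i+u) b) as [Hl|]; auto.
      assert (0 <= j - w) by (apply (keyK (i+u) (j-w) p q); try lia; nia). lia. }
    assert (0 <= j + w).
    { apply (keyK (i-u) (j+w) r s); try lia; nia. }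
    exists i, j. lia.
  - intros [i [j [Hi [Hj Ex]]]].
    assert (Hne : 2*w <> a) by nia.
    split; [split|split].
    + nia.
    + intros Hs. apply semi_ex in Hs as [p [q [Hp0 [Hq0 E]]]].
      assert (0 <= j) by (apply (keyK i j p q); lia). lia.
    + apply (semi_in (i-u) (j+w)); nia.
    + apply (semi_in (i+u-b) (j-w+a)); nia.
Qed.

Lemma mainL : exists l : list Z, NoDup l /\ (forall x, In x l <-> is_isolated_gap2 a b x)
  /\ Z.of_nat (length l) = u*w.
Proof.
  exists (map (fun pr => fst pr * a + snd pr * b) (list_prod (rng (b-u) u) (rng (-w) w))).
  split; [|split].
  - apply NoDup_map_NoDup_ForallPairs.
    + intros [i j] [i' j'] H1 H2 E. simpl in E.
      apply in_prod_iff in H1 as [H1 H1']. apply in_prod_iff in H2 as [H2 H2'].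
      rewrite rng_In in H1, H2, H1', H2' by lia.
      set (k := (j-j')*u - (i'-i)*w).
      assert (Hk : i' - i = k*b).
      { unfold k. assert ((i'-i)*(a*u) = (i'-i)*(1 + b*w)) by (f_equal; lia). nia. }
      assert (k = 0) by nia.
      assert (i = i') by nia. subst i'.
      assert (j = j') by nia. now subst.
    + apply NoDup_prod; apply rng_NoDup.
  - intros x. rewrite charac, in_map_iff. split.
    + intros [[i j] [E H]]. apply in_prod_iff in H as [H1 H2].
      rewrite rng_In in H1, H2 by lia. exists i, j. simpl in E. lia.
    + intros [i [j [Hi [Hj E]]]]. exists (i, j). split; [simpl; lia|].
      apply in_prod_iff. rewrite !rng_In by lia. lia.
  - rewrite length_map, length_prod, !rng_len, Nat2Z.inj_mul, !Z2Nat.id; lia.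
Qed.


End L.

Lemma semi_sym a b x : in_semigroup2 a b x <-> in_semigroup2 b a x.
Proof. split; intros [l1 [l2 E]]; exists l2, l1; lia. Qed.

Lemma iso_sym a b x : is_isolated_gap2 a b x <-> is_isolated_gap2 b a x.
Proof. unfold is_isolated_gap2, is_gap2. rewrite !(semi_sym a b). tauto. Qed.

Theorem theorem3p4 (a b u v : Z) :
  1 < a -> a < b -> Z.gcd a b = 1 ->
  definitely_least_solution a b u v ->
  exists l : list Z,
    NoDup l /\
    (forall x : Z, In x l <-> is_isolated_gap2 a b x) /\
    Z.of_nat (length l) = Z.abs (u * v).
Proof.
  intros Ha Hab _ [E Hmin].
  destruct (Hmin (u - b) (v + a)) as [H1 H2]; [lia|].
  destruct (Hmin (u + b) (v - a)) as [H3 H4]; [lia|].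
  assert (u <> 0) by (intro; subst; destruct (Z_lt_le_dec v 1); nia).
  assert (v <> 0) by (intro; subst; destruct (Z_lt_le_dec u 1); nia).
  destruct (Z_lt_le_dec v 0) as [Hv|Hv].
  - assert (0 < u) by nia.
    destruct (mainL a b u (-v)) as [l [Hl1 [Hl2 Hl3]]]; try lia.
    exists l. split; [auto|split; [auto|]]. rewrite Hl3. nia.
  - assert (u < 0) by nia.
    destruct (mainL b a v (-u)) as [l [Hl1 [Hl2 Hl3]]]; try lia.
    exists l. split; [auto|split].
    + intros x. rewrite iso_sym. auto.
    + rewrite Hl3. nia.
Qed.
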